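(* Suppose Assumption 1 holds. Let $N\ge 1$, let $\Phi_N:\Xi\to\mathbb{R}^N$ be any feature map and let $W^\star(x)$ be a minimizer of $G_{\Phi_N}(x,\cdot)$. Then for every $x\in\mathbb{R}^{d_x}$, $$\|\nabla F(x)-\nabla F_{\Phi_N}(x)\|\le K\cdot \mathbb{E}_{\xi\sim\mathbb{P}_\xi}\big\|W^\star(x)\Phi_N(\xi)-y^\star(x,\xi)\big\|,$$ where $K = L_{f,1} + \frac{L_{g,2} L_{f,0}}{\mu} + \frac{L_{g,2} L_{g,1} L_{f,0}}{\mu^2} + \frac{L_{f,1} L_{g, 1}}{\mu}$.
   Context: Setting. Let $d_x,d_y,d_\xi,d_\eta\ge 1$. Let $(\xi,\eta)$ be a random vector in $\mathbb{R}^{d_\xi}\times\mathbb{R}^{d_\eta}$ with joint law $\mathbb{P}_{(\xi,\eta)}$; $\mathbb{P}_\xi$ is the marginal law of $\xi$, with support $\Xi\subseteq\mathbb{R}^{d_\xi}$, and $\mathbb{P}_{\eta|\xi}$ the conditional law of $\eta$ given $\xi$. Let $f,g:\mathbb{R}^{d_x}\times\mathbb{R}^{d_y}\times\Xi\times\mathbb{R}^{d_\eta}\to\mathbb{R}$ be twice differentiable in $(x,y)$. Put $G(x,y,\xi)=\mathbb{E}_{\eta\sim\mathbb{P}_{\eta|\xi}}[g(x,y,\xi,\eta)]$, $y^\star(x,\xi)=\arg\min_{y\in\mathbb{R}^{d_y}}G(x,y,\xi)$, and $F(x)=\mathbb{E}_{(\xi,\eta)}[f(x,y^\star(x,\xi),\xi,\eta)]$.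 $\nabla_1,\nabla_2$ denote partial gradients in $x$ and $y$; $\nabla^2_{12},\nabla^2_{22}$ the corresponding blocks of the Hessian. $\|\cdot\|$ is the Euclidean norm for vectors and the spectral norm for matrices. The variance of a random vector/matrix $X$ is $\mathbb{E}\|X-\mathbb{E}X\|^2$. Assumption 1: (i) $f,\nabla f,\nabla g,\nabla^2 g$ (derivatives in $(x,y)$) are $L_{f,0},L_{f,1},L_{g,1},L_{g,2}$-Lipschitz in $(x,y)$ for every fixed $(\xi,\eta)$; (ii) $g$ is $\mu$-strongly convex in $y$ ($\mu>0$) for all $(x,\xi,\eta)$; (iii) for $\eta\sim\mathbb{P}_{\eta|\xi}$, $\nabla f,\nabla g,\nabla^2 g$ are unbiased estimators of the corresponding derivatives of $\mathbb{E}_{\eta|\xi}f$, $G$, with (conditional) variances bounded by $\sigma_f^2,\sigma_{g,1}^2,\sigma_{g,2}^2$ uniformly in $x,y,\xi$. Basis notation. For a feature map $\Phi_N:\Xi\to\mathbb{R}^N$ and $W\in\mathbb{R}^{d_y\times N}$, set $f_{\Phi_N}(x,W,\xi,\eta)=f(x,W\Phi_N(\xi),\xi,\eta)$, $g_{\Phi_N}(x,W,\xi,\eta)=g(x,W\Phi_N(\xi),\xi,\eta)$, $G_{\Phi_N}(x,W)=\mathbb{E}_{(\xi,\eta)}[g_{\Phi_N}(x,W,\xi,\eta)]$, $W^\star(x)\in\arg\min_W G_{\Phi_N}(x,W)$, $F_{\Phi_N}(x)=\mathbb{E}_{(\xi,\eta)}[f_{\Phi_N}(x,W^\star(x),\xi,\eta)]$.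 Hypergradients. Here $\nabla F(x)$ and $\nabla F_{\Phi_N}(x)$ denote $\nabla F(x)=\mathbb{E}_{(\xi,\eta)}\big[\nabla_1 f(x,\bar y,\xi,\eta)-\nabla^2_{12}g(x,\bar y,\xi,\eta)[\nabla^2_{22}g(x,\bar y,\xi,\eta)]^{-1}\nabla_2 f(x,\bar y,\xi,\eta)\big]$ with $\bar y=y^\star(x,\xi)$, and $\nabla F_{\Phi_N}(x)$ is the same expression with $\bar y=W^\star(x)\Phi_N(\xi)$. *)

(* Defs.v *)
From HB Require Import structures.
From mathcomp Require Import all_boot all_order all_algebra.
From mathcomp Require Import all_classical all_reals all_analysis.
Set Implicit Arguments. Unset Strict Implicit. Unset Printing Implicit Defensive.
Import Order.TTheory GRing.Theory Num.Theory.
Import numFieldNormedType.Exports.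
Local Open Scope classical_set_scope.
Local Open Scope ring_scope.

Section Defs.
Variable R : realType.

Definition enorm n (v : 'cV[R]_n) : R := Num.sqrt (\sum_i (v i ord0) ^+ 2).

Definition vdot n (u v : 'cV[R]_n) : R := (u^T *m v) ord0 ord0.

Definition specnorm m n (A : 'M[R]_(m, n)) : R :=
  sup [set enorm (A *m v) | v in [set v : 'cV[R]_n | enorm v <= 1]].

Definition stack dx dy (x : 'cV[R]_dx) (y : 'cV[R]_dy) : 'cV[R]_(dx + dy) :=
  col_mx x y.

Definition is_gradient dx dy (F : 'cV[R]_dx -> 'cV[R]_dy -> R)
    (D : 'cV[R]_dx -> 'cV[R]_dy -> 'cV[R]_(dx + dy)) : Prop :=
  forall (x : 'cV[R]_dx) (y : 'cV[R]_dy),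
    differentiable (fun p : 'cV[R]_dx * 'cV[R]_dy => F p.1 p.2) (x, y) /\
    forall h : 'cV[R]_dx * 'cV[R]_dy,
      'd (fun p : 'cV[R]_dx * 'cV[R]_dy => F p.1 p.2) (x, y) h
        = vdot (D x y) (stack h.1 h.2).

(* [J] is the Jacobian (in (x,y)) of the vector field [V]; when V is a
   gradient, J is the Hessian. *)
Definition is_jacobian dx dy k (V : 'cV[R]_dx -> 'cV[R]_dy -> 'cV[R]_k)
    (J : 'cV[R]_dx -> 'cV[R]_dy -> 'M[R]_(k, dx + dy)) : Prop :=
  forall (x : 'cV[R]_dx) (y : 'cV[R]_dy),
    differentiable (fun p : 'cV[R]_dx * 'cV[R]_dy => V p.1 p.2) (x, y) /\
    forall h : 'cV[R]_dx * 'cV[R]_dy,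
      'd (fun p : 'cV[R]_dx * 'cV[R]_dy => V p.1 p.2) (x, y) h
        = J x y *m stack h.1 h.2.

Definition lipschitz_xy dx dy (F : 'cV[R]_dx -> 'cV[R]_dy -> R) (L : R) :=
  forall x x' y y', `|F x y - F x' y'| <= L * enorm (stack (x - x') (y - y')).

Definition lipschitz_xy_vec dx dy k
    (F : 'cV[R]_dx -> 'cV[R]_dy -> 'cV[R]_k) (L : R) :=
  forall x x' y y',
    enorm (F x y - F x' y') <= L * enorm (stack (x - x') (y - y')).

Definition lipschitz_xy_mat dx dy k l
    (F : 'cV[R]_dx -> 'cV[R]_dy -> 'M[R]_(k, l)) (L : R) :=
  forall x x' y y',
    specnorm (F x y - F x' y') <= L * enorm (stack (x - x') (y - y')).

Definition strongly_convex_y dy (G : 'cV[R]_dy -> R) (mu : R) :=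
  forall (y1 y2 : 'cV[R]_dy) (t : R), 0 <= t <= 1 ->
    G (t *: y1 + (1 - t) *: y2)
      <= t * G y1 + (1 - t) * G y2 - mu / 2 * t * (1 - t) * enorm (y1 - y2) ^+ 2.

Definition Evec d (T : measurableType d) (P : probability T R) n
    (h : T -> 'cV[R]_n) : 'cV[R]_n :=
  \col_i Rintegral P setT (fun t => h t i ord0).

Definition Emat d (T : measurableType d) (P : probability T R) m n
    (h : T -> 'M[R]_(m, n)) : 'M[R]_(m, n) :=
  \matrix_(i, j) Rintegral P setT (fun t => h t i j).

(* The integrand of the hypergradient formula:
   grad_1 f - grad^2_12 g [grad^2_22 g]^-1 grad_2 f, built from the full
   gradient Df of f and the full Hessian Hg of g in (x,y). *)
Definition hyper_integrand dx dy (Df : 'cV[R]_(dx + dy))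
    (Hg : 'M[R]_(dx + dy)) : 'cV[R]_dx :=
  usubmx Df - ursubmx Hg *m invmx (drsubmx Hg) *m dsubmx Df.

End Defs.

Section Hyper.
Variable R : realType.
(* The hypergradient E_{(xi,eta)}[ hyper_integrand at ybar(xi) ], where the
   inner variable is ybar(xi) (y*(x,xi) for F, W*(x) Phi_N(xi) for F_Phi). *)
Definition hypergrad d1 d2 (T1 : measurableType d1) (T2 : measurableType d2)
    (P : probability (T1 * T2)%type R) dx dy
    (Df : 'cV[R]_dx -> 'cV[R]_dy -> T1 -> T2 -> 'cV[R]_(dx + dy))
    (Hg : 'cV[R]_dx -> 'cV[R]_dy -> T1 -> T2 -> 'M[R]_(dx + dy))
    (ybar : T1 -> 'cV[R]_dy) (x : 'cV[R]_dx) : 'cV[R]_dx :=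
  Evec P (fun p => hyper_integrand (Df x (ybar p.1) p.1 p.2)
                                   (Hg x (ybar p.1) p.1 p.2)).
End Hyper.

(* Main.v *)
Require Import Defs.
From HB Require Import structures.
From mathcomp Require Import all_boot all_order all_algebra.
From mathcomp Require Import all_classical all_reals all_analysis.
From mathcomp Require Import ring lra.
Set Implicit Arguments. Unset Strict Implicit. Unset Printing Implicit Defensive.
Import Order.TTheory GRing.Theory Num.Theory.
Import numFieldNormedType.Exports.
Local Open Scope classical_set_scope.
Local Open Scope ring_scope.

Section LA.
Variable R : realType.
Definition dot n (u v : 'cV[R]_n) : R := \sum_i u i ord0 * v i ord0.

Lemma vdotE n (u v : 'cV[R]_n) : vdot u v = dot u v.
Proof. by rewrite /vdot /dot mxE; apply: eq_bigr => i _; rewrite mxE. Qed.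

Lemma dotC n (u v : 'cV[R]_n) : dot u v = dot v u.
Proof. by apply: eq_bigr => i _; rewrite mulrC. Qed.

Lemma dot_ge0 n (u : 'cV[R]_n) : 0 <= dot u u.
Proof. by apply: sumr_ge0 => i _; rewrite -expr2 sqr_ge0. Qed.

Lemma enormE n (u : 'cV[R]_n) : enorm u = Num.sqrt (dot u u).
Proof. by rewrite /enorm /dot; congr Num.sqrt; apply: eq_bigr => i _; rewrite expr2. Qed.

Lemma enorm_ge0 n (u : 'cV[R]_n) : 0 <= enorm u.
Proof. by rewrite enormE sqrtr_ge0. Qed.

Lemma enorm_sq n (u : 'cV[R]_n) : enorm u ^+ 2 = dot u u.
Proof. by rewrite enormE sqr_sqrtr // dot_ge0. Qed.

Lemma dotDl n (u v w : 'cV[R]_n) : dot (u + v) w = dot u w + dot v w.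
Proof. by rewrite /dot -big_split; apply: eq_bigr => i _; rewrite !mxE mulrDl. Qed.
Lemma dotZl n a (u w : 'cV[R]_n) : dot (a *: u) w = a * dot u w.
Proof. by rewrite /dot mulr_sumr; apply: eq_bigr => i _; rewrite !mxE mulrA. Qed.
Lemma dotNl n (u w : 'cV[R]_n) : dot (- u) w = - dot u w.
Proof. by rewrite /dot -sumrN; apply: eq_bigr => i _; rewrite !mxE mulNr. Qed.
Lemma dotBl n (u v w : 'cV[R]_n) : dot (u - v) w = dot u w - dot v w.
Proof. by rewrite dotDl dotNl. Qed.
Lemma dot0l n (w : 'cV[R]_n) : dot 0 w = 0.
Proof. by rewrite /dot big1 // => i _; rewrite mxE mul0r. Qed.

Lemma lagrange n (u v : 'cV[R]_n) :
  \sum_i \sum_j (u i ord0 * v j ord0 - u j ord0 * v i ord0) ^+ 2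
  = 2 * (dot u u * dot v v) - 2 * (dot u v) ^+ 2.
Proof.
set a := fun i => u i ord0; set b := fun i => v i ord0.
have e1 : dot u u * dot v v = \sum_i \sum_j (a i ^+ 2 * b j ^+ 2).
  rewrite /dot mulr_suml; apply: eq_bigr => i _; rewrite mulr_sumr.
  by apply: eq_bigr => j _; rewrite /a /b !expr2.
have e2 : dot u u * dot v v = \sum_i \sum_j (a j ^+ 2 * b i ^+ 2).
  by rewrite e1 exchange_big.
have e3 : dot u v ^+ 2 = \sum_i \sum_j (a i * b i * (a j * b j)).
  rewrite expr2 /dot mulr_suml; apply: eq_bigr => i _; rewrite mulr_sumr.
  by apply: eq_bigr => j _.
have -> : 2 * (dot u u * dot v v) - 2 * dot u v ^+ 2 =
   dot u u * dot v v + dot u u * dot v v - 2 * dot u v ^+ 2 by ring.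
rewrite {1}e1 e2 e3 mulr_sumr -big_split -sumrB /=.
apply: eq_bigr => i _; rewrite mulr_sumr -big_split -sumrB /=.
by apply: eq_bigr => j _; rewrite /a /b; ring.
Qed.

Lemma CS2 n (u v : 'cV[R]_n) : dot u v ^+ 2 <= dot u u * dot v v.
Proof.
have := lagrange u v.
have H : 0 <= \sum_i \sum_j (u i ord0 * v j ord0 - u j ord0 * v i ord0) ^+ 2.
  by apply: sumr_ge0 => i _; apply: sumr_ge0 => j _; apply: sqr_ge0.
move=> E; rewrite E in H; lra.
Qed.

Lemma CS n (u v : 'cV[R]_n) : `|dot u v| <= enorm u * enorm v.
Proof.
rewrite !enormE -sqrtrM ?dot_ge0 //.
rewrite -(sqrtr_sqr (dot u v)); rewrite ler_sqrt ?CS2 //.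
by rewrite mulr_ge0 ?dot_ge0.
Qed.

Lemma CS' n (u v : 'cV[R]_n) : dot u v <= enorm u * enorm v.
Proof. exact: le_trans (ler_norm _) (CS u v). Qed.

Lemma enormD n (u v : 'cV[R]_n) : enorm (u + v) <= enorm u + enorm v.
Proof.
rewrite -(ler_pXn2r (_ : (0 < 2)%N)) ?nnegrE ?addr_ge0 ?enorm_ge0 //.
rewrite enorm_sq dotDl (dotC u) (dotC v) !dotDl.
have := CS' u v; have := enorm_sq u; have := enorm_sq v; rewrite (dotC v u).
move=> ? ? ?; nra.
Qed.

Lemma enormZ n a (u : 'cV[R]_n) : enorm (a *: u) = `|a| * enorm u.
Proof.
rewrite !enormE dotZl dotC dotZl mulrA -expr2 sqrtrM ?sqr_ge0 //.
by rewrite sqrtr_sqr.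
Qed.

Lemma enormN n (u : 'cV[R]_n) : enorm (- u) = enorm u.
Proof. by rewrite -scaleN1r enormZ normrN normr1 mul1r. Qed.

Lemma enormB n (u v : 'cV[R]_n) : enorm (u - v) <= enorm u + enorm v.
Proof. by rewrite -(enormN v) enormD. Qed.

Lemma enorm0 n : enorm (0 : 'cV[R]_n) = 0.
Proof. by rewrite enormE dot0l sqrtr0. Qed.
End LA.


Section LB.
Variable R : realType.

Lemma dot_eq0 n (u : 'cV[R]_n) : dot u u = 0 -> u = 0.
Proof.
move=> /eqP; rewrite /dot psumr_eq0 => [/allP H|i _]; last by rewrite -expr2 sqr_ge0.
apply/matrixP => i j; rewrite (ord1 j) mxE.
by have := H i (mem_index_enum _); rewrite /= mulf_eq0 orbb => /eqP.
Qed.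

Lemma enorm_eq0 n (u : 'cV[R]_n) : enorm u = 0 -> u = 0.
Proof. by move=> H; apply: dot_eq0; rewrite -enorm_sq H expr0n. Qed.

Definition opb m n (A : 'M[R]_(m, n)) (c : R) :=
  forall v, enorm (A *m v) <= c * enorm v.

Definition frob m n (A : 'M[R]_(m, n)) : R :=
  Num.sqrt (\sum_i \sum_j A i j ^+ 2).

Lemma opb_frob m n (A : 'M[R]_(m, n)) : opb A (frob A).
Proof.
move=> v; rewrite enormE /frob -sqrtrM; last first.
  by apply: sumr_ge0 => i _; apply: sumr_ge0 => j _; apply: sqr_ge0.
rewrite ler_sqrt; last by apply: mulr_ge0; [apply: sumr_ge0 => i _; apply: sumr_ge0 => j _; apply: sqr_ge0|apply: dot_ge0].
rewrite /dot mulr_suml; apply: ler_sum => i _.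
pose r : 'cV[R]_n := \col_j A i j.
have -> : (A *m v) i ord0 = dot r v by rewrite mxE; apply: eq_bigr => j _; rewrite mxE.
have -> : \sum_j A i j ^+ 2 = dot r r by apply: eq_bigr => j _; rewrite mxE expr2.
by rewrite -expr2; apply: CS2.
Qed.

Lemma opb_ge0 m n (A : 'M[R]_(m, n)) : 0 <= frob A.
Proof. exact: sqrtr_ge0. Qed.

Lemma specnorm_ge0 m n (A : 'M[R]_(m, n)) : 0 <= specnorm A.
Proof.
set S := [set enorm (A *m v) | v in [set v : 'cV[R]_n | enorm v <= 1]].
have ubS : has_ubound S.
  exists (frob A) => _ [v /= v1 <-].
  apply: le_trans (opb_frob A v) _; rewrite -[leRHS]mulr1.
  by apply: ler_wpM2l => //; apply: opb_ge0.
have S0 : S (enorm (A *m 0)) by exists 0 => //=; rewrite enorm0.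
by rewrite -(@enorm0 R m) -(mulmx0 1 A); apply: ub_le_sup.
Qed.

Lemma specnorm_opb m n (A : 'M[R]_(m, n)) : opb A (specnorm A).
Proof.
set S := [set enorm (A *m v) | v in [set v : 'cV[R]_n | enorm v <= 1]].
have ubS : has_ubound S.
  exists (frob A) => _ [v /= v1 <-].
  apply: le_trans (opb_frob A v) _; rewrite -[leRHS]mulr1.
  by apply: ler_wpM2l => //; apply: opb_ge0.
have S0 : S (enorm (A *m 0)) by exists 0 => //=; rewrite enorm0.
have inS v : enorm v <= 1 -> enorm (A *m v) <= specnorm A.
  by move=> v1; apply: ub_le_sup => //; exists v.
have sp0 : 0 <= specnorm A by apply: le_trans (inS 0 _); rewrite ?enorm0 ?enorm_ge0.
move=> v; have [v0|vn0] := eqVneq (enorm v) 0.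
  by have := opb_frob A v; rewrite v0 !mulr0.
have vp : 0 < enorm v by rewrite lt_def vn0 enorm_ge0.
have := inS ((enorm v)^-1 *: v).
rewrite enormZ ger0_norm ?invr_ge0 ?enorm_ge0 // mulVf // lexx => /(_ isT).
rewrite -scalemxAr enormZ ger0_norm ?invr_ge0 ?enorm_ge0 //.
by rewrite ler_pdivrMl // mulrC.
Qed.

Lemma opb_le m n (A : 'M[R]_(m, n)) a b : opb A a -> a <= b -> opb A b.
Proof. by move=> H ab v; apply: le_trans (H v) _; apply: ler_wpM2r => //; apply: enorm_ge0. Qed.

Lemma opbM m n p (A : 'M[R]_(m, n)) (B : 'M[R]_(n, p)) a b :
  0 <= a -> opb A a -> opb B b -> opb (A *m B) (a * b).
Proof.
move=> a0 HA HB v; rewrite -mulmxA; apply: le_trans (HA _) _.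
by rewrite -mulrA; apply: ler_wpM2l.
Qed.

Lemma opbD m n (A B : 'M[R]_(m, n)) a b :
  opb A a -> opb B b -> opb (A + B) (a + b).
Proof.
move=> HA HB v; rewrite mulmxDl mulrDl; apply: le_trans (enormD _ _) _.
exact: lerD.
Qed.

Lemma opbN m n (A : 'M[R]_(m, n)) a : opb A a -> opb (- A) a.
Proof. by move=> H v; rewrite mulNmx enormN. Qed.

Lemma enorm_col m n (u : 'cV[R]_m) (w : 'cV[R]_n) :
  enorm (col_mx u w) ^+ 2 = enorm u ^+ 2 + enorm w ^+ 2.
Proof.
rewrite !enorm_sq /dot big_split_ord /=; congr (_ + _); apply: eq_bigr => i _.
  by rewrite col_mxEu.
by rewrite col_mxEd.
Qed.

Lemma enorm_usub m n (u : 'cV[R]_(m + n)) : enorm (usubmx u) <= enorm u.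
Proof.
rewrite -{2}(vsubmxK u) -(ler_pXn2r (_ : (0 < 2)%N)) ?nnegrE ?enorm_ge0 //.
by rewrite enorm_col lerDl sqr_ge0.
Qed.

Lemma enorm_dsub m n (u : 'cV[R]_(m + n)) : enorm (dsubmx u) <= enorm u.
Proof.
rewrite -{2}(vsubmxK u) -(ler_pXn2r (_ : (0 < 2)%N)) ?nnegrE ?enorm_ge0 //.
by rewrite enorm_col lerDr sqr_ge0.
Qed.

Lemma enorm_col0 m n (w : 'cV[R]_n) : enorm (col_mx (0 : 'cV[R]_m) w) = enorm w.
Proof.
apply/eqP; rewrite -(eqrXn2 (_ : (0 < 2)%N)) ?enorm_ge0 //.
by rewrite enorm_col enorm0 expr0n add0r.
Qed.

Lemma ursub_mul m n (A : 'M[R]_(m + n)) (w : 'cV[R]_n) :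
  ursubmx A *m w = usubmx (A *m col_mx 0 w).
Proof.
rewrite -mul_usub_mx -[usubmx A]hsubmxK mul_row_col mulmx0 add0r.
by rewrite /ursubmx.
Qed.

Lemma drsub_mul m n (A : 'M[R]_(m + n)) (w : 'cV[R]_n) :
  drsubmx A *m w = dsubmx (A *m col_mx 0 w).
Proof.
rewrite -mul_dsub_mx -[dsubmx A]hsubmxK mul_row_col mulmx0 add0r.
by rewrite /drsubmx.
Qed.

Lemma opb_ursub m n (A : 'M[R]_(m + n)) c : opb A c -> opb (ursubmx A) c.
Proof.
move=> H w; rewrite ursub_mul; apply: le_trans (enorm_usub _) _.
by apply: le_trans (H _) _; rewrite enorm_col0.
Qed.

Lemma opb_drsub m n (A : 'M[R]_(m + n)) c : opb A c -> opb (drsubmx A) c.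
Proof.
move=> H w; rewrite drsub_mul; apply: le_trans (enorm_dsub _) _.
by apply: le_trans (H _) _; rewrite enorm_col0.
Qed.

Lemma coercive_inv n (M : 'M[R]_n) mu : 0 < mu ->
  (forall h, mu * enorm h ^+ 2 <= dot (M *m h) h) ->
  M \in unitmx /\ opb (invmx M) mu^-1.
Proof.
move=> mu0 Hc.
have low h : mu * enorm h <= enorm (M *m h).
  have := Hc h; have := CS' (M *m h) h; have := enorm_ge0 h.
  have := enorm_ge0 (M *m h).
  have [h0|hn] := eqVneq (enorm h) 0.
    by rewrite h0 !mulr0 => a b c d.
  move=> a b c d; have hp : 0 < enorm h by rewrite lt_def hn b.
  rewrite -(ler_pM2r hp); nra.
have Mu : M \in unitmx.
  rewrite -unitmx_tr -row_free_unit; apply: inj_row_free => v vM.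
  have : M *m v^T = 0 by rewrite -(trmxK (M *m v^T)) trmx_mul trmxK vM trmx0.
  move=> Mv; have := low v^T; rewrite Mv enorm0 => H.
  have : enorm v^T = 0.
    by apply/eqP; rewrite eq_le enorm_ge0 andbT -(pmulr_rle0 _ mu0).
  by move/enorm_eq0 => E; rewrite -(trmxK v) E trmx0.
split => // u; have := low (invmx M *m u); rewrite mulmxA mulmxV // mul1mx.
move=> H; have mi : 0 <= mu^-1 by rewrite invr_ge0 ltW.
have := ler_wpM2l mi H.
by rewrite mulrA mulVf ?mul1r // gt_eqF.
Qed.
End LB.


Section Deriv.
Variables (R : realType) (dx dy : nat).
Local Notation V := ('cV[R]_dx * 'cV[R]_dy)%type.

Lemma dirlim (W : normedModType R) (F : V -> W) (p v : V) :
  differentiable F p ->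
  (fun t : R => t^-1 *: (F (t *: v + p) - F p)) @ 0^' --> 'd F p v.
Proof. by move=> d; rewrite -deriveE //; apply: diff_derivable. Qed.

Lemma pairE (t : R) (a x : 'cV[R]_dx) (b y : 'cV[R]_dy) :
  t *: ((a, b) : V) + (x, y) = (t *: a + x, t *: b + y).
Proof. by []. Qed.

Lemma dot_cont n (w : 'cV[R]_n) : continuous (fun M : 'cV[R]_n => dot M w).
Proof.
rewrite /dot; apply: continuous_big => //.
  exact: add_continuous.
move=> i _ M; apply: (@continuousM R _ (fun M : 'cV[R]_n => M i ord0) (fun=> w i ord0)).
  exact: coord_continuous.
exact: cst_continuous.
Qed.


Lemma scale_bound (t a b : R) : t != 0 -> a <= `|t| * b -> `|t|^-1 * a <= b.
Proof.
move=> t0 H; have tp : 0 < `|t| by rewrite normr_gt0.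
by rewrite -(ler_pM2l tp) mulrA mulfV ?mul1r // gt_eqF.
Qed.

Lemma grad_sq (F : 'cV[R]_dx -> 'cV[R]_dy -> R) D L x y :
  is_gradient F D -> lipschitz_xy F L -> enorm (D x y) ^+ 2 <= L * enorm (D x y).
Proof.
move=> HG HL; have [dif dd] := HG x y.
set d := D x y.
pose v : V := (usubmx d, dsubmx d).
have Hq := dirlim (v:=v) dif.
rewrite dd /= /stack vsubmxK vdotE -enorm_sq in Hq.
apply: (ler_cvg_to Hq (cvg_cst (L * enorm d))).
near=> t; have t0 : t != 0 by near: t; exact: nbhs_dnbhs_neq.
rewrite /=; apply: le_trans (ler_norm _) _.
rewrite normrZ normfV; apply: scale_bound => //.
have := HL (t *: usubmx d + x) x (t *: dsubmx d + y) y.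
rewrite !addrK /stack -scale_col_mx vsubmxK enormZ mulrCA; exact.
Unshelve. all: by end_near. Qed.

Lemma jac_opb k (F : 'cV[R]_dx -> 'cV[R]_dy -> 'cV[R]_k) J L x y :
  is_jacobian F J -> lipschitz_xy_vec F L -> 0 <= L -> opb (J x y) L.
Proof.
move=> HG HL L0 h; have [dif dd] := HG x y.
pose v : V := (usubmx h, dsubmx h).
set w := J x y *m h.
have Hq := dirlim (v:=v) dif.
rewrite dd /= /stack vsubmxK in Hq.
have Hq2 := cvg_comp _ _ Hq (@dot_cont _ w w).
have : enorm w ^+ 2 <= (L * enorm h) * enorm w.
  rewrite enorm_sq; apply: (ler_cvg_to Hq2 (cvg_cst _)).
  near=> t; have t0 : t != 0 by near: t; exact: nbhs_dnbhs_neq.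
  rewrite /=; apply: le_trans (CS' _ _) _.
  apply: ler_wpM2r; first exact: enorm_ge0.
  rewrite enormZ normfV; apply: scale_bound => //.
  have := HL (t *: usubmx h + x) x (t *: dsubmx h + y) y.
  rewrite !addrK /stack -scale_col_mx vsubmxK enormZ mulrCA; exact.
have := enorm_ge0 w; have := enorm_ge0 h.
have [->|wn] := eqVneq (enorm w) 0; first by move=> *; apply: mulr_ge0.
move=> a b c; have wp : 0 < enorm w by rewrite lt_def wn b.
by rewrite expr2 ler_pM2r in c.
Unshelve. all: by end_near. Qed.

End Deriv.


Section SC.
Variables (R : realType) (dx dy : nat).
Local Notation V := ('cV[R]_dx * 'cV[R]_dy)%type.

Lemma dotZr n a (u w : 'cV[R]_n) : dot u (a *: w) = a * dot u w.
Proof. by rewrite dotC dotZl dotC. Qed.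

Lemma dot_col0 (u : 'cV[R]_(dx + dy)) (w : 'cV[R]_dy) :
  dot u (col_mx 0 w) = dot (dsubmx u) w.
Proof.
rewrite /dot big_split_ord /= big1 ?add0r.
  by apply: eq_bigr => i _; rewrite col_mxEd mxE.
by move=> i _; rewrite col_mxEu mxE mulr0.
Qed.

Variables (G : 'cV[R]_dx -> 'cV[R]_dy -> R) (D : 'cV[R]_dx -> 'cV[R]_dy -> 'cV[R]_(dx + dy))
  (H : 'cV[R]_dx -> 'cV[R]_dy -> 'M[R]_(dx + dy)) (mu : R) (x : 'cV[R]_dx) (y h : 'cV[R]_dy).
Hypotheses (HG : is_gradient G D) (HJ : is_jacobian D H)
  (Hsc : strongly_convex_y (G x) mu).

Let phi (t : R) := G x (t *: h + y).
Let c0 := col_mx (0 : 'cV[R]_dx) h.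
Let psi (t : R) := dot (D x (t *: h + y)) c0.

Lemma phi_quot t c :
  (fun s => s^-1 * (phi (t + s * c) - phi t)) @ 0^' --> c * psi t.
Proof.
have [dif dd] := HG x (t *: h + y).
have := dirlim (v := c *: ((0, h) : V)) dif.
rewrite dd /= /stack -scale_col_mx vdotE dotZr.
rewrite (eq_cvg _ _ (g := fun s => s^-1 * (phi (t + s * c) - phi t))) // => s /=.
rewrite /phi !scaler0 add0r; congr (_ * (G x _ - _)).
by rewrite scalerA scalerDl addrA (addrC ((s * c) *: h)).
Qed.


Lemma right_sub (f : R -> R) (l : R) : f @ (0:R)^' --> l -> f @ (0:R)^'+ --> l.
Proof.
move=> Hf; apply: cvg_trans Hf; apply: cvg_fmap2; apply: within_subset => u /= u0.
by rewrite gt_eqF.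
Qed.

Lemma id_right : (fun s : R => s) @ (0:R)^'+ --> (0 : R).
Proof. by apply: cvg_at_right_filter; apply: cvg_id. Qed.

Lemma step1 t : 0 < t -> t * psi 0 <= phi t - phi 0 - mu / 2 * t ^+ 2 * enorm h ^+ 2.
Proof.
move=> tp.
have Hq := right_sub (@phi_quot 0 t).
set A := phi t - phi 0; set B := mu / 2 * t ^+ 2 * enorm h ^+ 2.
have Hr : (fun s => A - B + s * B) @ 0^'+ --> A - B + 0 * B.
  have Fr : Filter (0:R)^'+ by exact: at_right_proper_filter.
  have h1 : (fun s => s * B) @ 0^'+ --> 0 * B.
    exact: (@cvgMr_tmp _ _ _ Fr (fun s => s) 0 B id_right).
  have h2 : (fun s : R => A - B) @ (0:R)^'+ --> A - B by exact: cvg_cst.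
  exact: (@cvgD _ _ _ _ Fr _ _ _ _ h2 h1).
rewrite mul0r addr0 in Hr.
have -> : A - B = phi t - phi 0 - mu / 2 * t ^+ 2 * enorm h ^+ 2 by [].
apply: (ler_cvg_to Hq Hr).
near=> s.
have s0 : 0 < s by near: s; exact: nbhs_right_gt.
have s1 : s < 1 by near: s; exact: nbhs_right_lt.
have s01 : 0 <= s <= 1 by rewrite (ltW s0) (ltW s1).
have := Hsc (t *: h + y) y (t := s) s01.
have e1 : s *: (t *: h + y) + (1 - s) *: y = (0 + s * t) *: h + y.
  rewrite scalerDr scalerBl scale1r scalerA add0r -addrA; congr (_ + _).
  by rewrite addrC subrK.
rewrite e1 addrK enormZ -/(phi (0 + s * t)).
have e2 : G x y = phi 0 by rewrite /phi scale0r add0r.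
have e3 : G x (t *: h + y) = phi t by [].
rewrite e2 e3 => Hc; rewrite /A /B.
rewrite -(ler_pM2l s0) mulVKf ?gt_eqF //.
rewrite ger0_norm ?(ltW tp) // exprMn in Hc.
nra.
Unshelve. all: by end_near. Qed.


Lemma step2 t : 0 < t -> - t * psi t <= phi 0 - phi t - mu / 2 * t ^+ 2 * enorm h ^+ 2.
Proof.
move=> tp.
have Hq := right_sub (@phi_quot t (- t)).
set A := phi 0 - phi t; set B := mu / 2 * t ^+ 2 * enorm h ^+ 2.
have Hr : (fun s => A - B + s * B) @ 0^'+ --> A - B + 0 * B.
  have Fr : Filter (0:R)^'+ by exact: at_right_proper_filter.
  have h1 : (fun s => s * B) @ 0^'+ --> 0 * B.
    exact: (@cvgMr_tmp _ _ _ Fr (fun s => s) 0 B id_right).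
  have h2 : (fun s : R => A - B) @ (0:R)^'+ --> A - B by exact: cvg_cst.
  exact: (@cvgD _ _ _ _ Fr _ _ _ _ h2 h1).
rewrite mul0r addr0 in Hr.
have -> : A - B = phi 0 - phi t - mu / 2 * t ^+ 2 * enorm h ^+ 2 by [].
apply: (ler_cvg_to Hq Hr).
near=> s.
have s0 : 0 < s by near: s; exact: nbhs_right_gt.
have s1 : s < 1 by near: s; exact: nbhs_right_lt.
have s01 : 0 <= s <= 1 by rewrite (ltW s0) (ltW s1).
have := Hsc y (t *: h + y) (t := s) s01.
have e1 : s *: y + (1 - s) *: (t *: h + y) = (t + s * - t) *: h + y.
  by apply/matrixP => i j; rewrite !mxE; ring.
have e4 : y - (t *: h + y) = - (t *: h).
  by apply/matrixP => i j; rewrite !mxE; ring.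
rewrite e1 e4 enormN enormZ -/(phi (t + s * - t)).
have e2 : G x y = phi 0 by rewrite /phi scale0r add0r.
have e3 : G x (t *: h + y) = phi t by [].
rewrite e2 e3 => Hc; rewrite /A /B.
rewrite -(ler_pM2l s0) mulVKf ?gt_eqF //.
rewrite ger0_norm ?(ltW tp) // exprMn in Hc.
nra.
Unshelve. all: by end_near. Qed.

Lemma step3 t : 0 < t -> mu * enorm h ^+ 2 <= t^-1 * (psi t - psi 0).
Proof.
move=> tp; have := step1 tp; have := step2 tp => a b.
rewrite -(ler_pM2l tp) mulVKf ?gt_eqF //.
nra.
Qed.

Lemma sc_hess : mu * enorm h ^+ 2 <= dot (drsubmx (H x y) *m h) h.
Proof.
have [dif dd] := HJ x y.
have Hq := dirlim (v := ((0, h) : V)) dif.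
rewrite dd /= /stack in Hq.
have Hq2 := right_sub (cvg_comp _ _ Hq (@dot_cont _ _ c0 _)).
rewrite drsub_mul -dot_col0.
apply: (ler_cvg_to (cvg_cst _) Hq2).
near=> t.
have tp : 0 < t by near: t; exact: nbhs_right_gt.
rewrite /= dotZl dotBl scaler0 add0r.
have -> : D x y = D x (0 *: h + y) by rewrite scale0r add0r.
exact: step3.
Unshelve. all: by end_near. Qed.

End SC.


Section Key.
Variable R : realType.

Lemma opb_app m n (A : 'M[R]_(m, n)) a v b :
  0 <= a -> opb A a -> enorm v <= b -> enorm (A *m v) <= a * b.
Proof. by move=> a0 H vb; apply: le_trans (H v) _; apply: ler_wpM2l. Qed.

Lemma key m n (u1 u2 : 'cV[R]_m) (c1 c2 : 'cV[R]_n) (A1 A2 : 'M[R]_(m, n))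
  (M1 M2 : 'M[R]_n) (Lf0 Lf1 Lg1 Lg2 mu del : R) :
  0 < mu -> 0 <= Lf0 -> 0 <= Lf1 -> 0 <= Lg1 -> 0 <= Lg2 -> 0 <= del ->
  M1 \in unitmx -> M2 \in unitmx ->
  opb (invmx M1) mu^-1 -> opb (invmx M2) mu^-1 ->
  enorm c1 <= Lf0 -> enorm (u1 - u2) <= Lf1 * del -> enorm (c1 - c2) <= Lf1 * del ->
  opb (A1 - A2) (Lg2 * del) -> opb (M1 - M2) (Lg2 * del) -> opb A2 Lg1 ->
  enorm ((u1 - A1 *m invmx M1 *m c1) - (u2 - A2 *m invmx M2 *m c2))
   <= (Lf1 + Lg2 * Lf0 / mu + Lg2 * Lg1 * Lf0 / mu ^+ 2 + Lf1 * Lg1 / mu) * del.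
Proof.
move=> mu0 f0 f1 g1 g2 d0 U1 U2 B1 B2 c1b ub cb HA HM HA2.
set iB1 := invmx M1; set iB2 := invmx M2.
have im0 : 0 <= mu^-1 by rewrite invr_ge0 ltW.
have eB : iB1 - iB2 = iB1 *m (- (M1 - M2)) *m iB2.
  rewrite opprB mulmxBr mulmxBl -!mulmxA mulmxV // mulmx1 mulmxA mulVmx // mul1mx.
  by [].
have eT : A1 *m iB1 *m c1 - A2 *m iB2 *m c2 =
   (A1 - A2) *m (iB1 *m c1) + A2 *m ((iB1 - iB2) *m c1) + A2 *m (iB2 *m (c1 - c2)).
  rewrite !mulmxBl !mulmxBr !mulmxA.
  by apply/matrixP => i j; rewrite !mxE; ring.
have t1 : enorm ((A1 - A2) *m (iB1 *m c1)) <= (Lg2 * del) * (mu^-1 * Lf0).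
  by apply: opb_app; [apply: mulr_ge0|exact: HA|apply: opb_app].
have t2 : enorm (A2 *m ((iB1 - iB2) *m c1)) <= Lg1 * ((mu^-1 * (Lg2 * del) * mu^-1) * Lf0).
  apply: opb_app => //; rewrite eB; apply: opb_app => //.
    by rewrite !mulr_ge0.
  apply: opbM; [by rewrite mulr_ge0 // mulr_ge0 | | exact: B2].
  apply: opbM => //; exact: opbN.
have t3 : enorm (A2 *m (iB2 *m (c1 - c2))) <= Lg1 * (mu^-1 * (Lf1 * del)).
  by apply: opb_app => //; apply: opb_app.
have tot : enorm ((u1 - A1 *m iB1 *m c1) - (u2 - A2 *m iB2 *m c2)) <=
   Lf1 * del + ((Lg2 * del) * (mu^-1 * Lf0) + Lg1 * ((mu^-1 * (Lg2 * del) * mu^-1) * Lf0)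
   + Lg1 * (mu^-1 * (Lf1 * del))).
  have -> : (u1 - A1 *m iB1 *m c1) - (u2 - A2 *m iB2 *m c2) =
     (u1 - u2) - (A1 *m iB1 *m c1 - A2 *m iB2 *m c2).
    by apply/matrixP => i j; rewrite !mxE; ring.
  apply: le_trans (enormB _ _) _; apply: lerD => //.
  rewrite eT; apply: le_trans (enormD _ _) _; apply: lerD => //.
  by apply: le_trans (enormD _ _) _; apply: lerD.
apply: le_trans tot _; rewrite le_eqVlt; apply/orP; left; apply/eqP.
by field; rewrite gt_eqF.
Qed.
End Key.


Section Int.
Context d (T : measurableType d) (R : realType) (P : probability T R).

Lemma Rint_sum (I : Type) (r : seq I) (f : I -> T -> R) :
  (forall i, P.-integrable setT (EFin \o f i)) ->
  Rintegral P setT (fun t => \sum_(i <- r) f i t) = \sum_(i <- r) Rintegral P setT (f i)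
  /\ P.-integrable setT (EFin \o (fun t => \sum_(i <- r) f i t)).
Proof.
move=> fi; elim: r => [|i r [IH1 IH2]].
  rewrite big_nil; split.
    under eq_Rintegral do rewrite big_nil.
    by rewrite Rintegral_cst // mul0r.
  apply: eq_integrable (integrable0 _ _) => // t _ /=.
  by rewrite big_nil.
rewrite big_cons; split.
  under eq_Rintegral do rewrite big_cons.
  by rewrite RintegralD // IH1.
apply: eq_integrable (integrableD _ (fi i) IH2) => // t _ /=.
by rewrite big_cons EFinD.
Qed.

Lemma int_bound n (h : T -> 'cV[R]_n) (g : T -> R) (D : set T) (K : R) :
  measurable D -> P (~` D) = 0%E -> 0 <= K ->
  (forall i, P.-integrable setT (fun t => (h t i ord0)%:E)) ->
  P.-integrable setT (fun t => (g t)%:E) ->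
  (forall t, 0 <= g t) ->
  (forall t, D t -> enorm (h t) <= K * g t) ->
  enorm (Evec P h) <= K * Rintegral P setT g.
Proof.
move=> mD PD K0 hi gi g0 hb.
set c := Evec P h.
have mN : measurable (~` D) by apply: measurableC.
have toD (f : T -> R) : P.-integrable setT (EFin \o f) ->
    Rintegral P setT f = Rintegral P D f.
  move=> fi; rewrite /Rintegral (negligible_integral mN measurableT fi PD).
  by rewrite setTD setCK.
have hci : forall i : 'I_n, P.-integrable setT (EFin \o (fun t => h t i ord0 * c i ord0)).
  move=> i; apply: eq_integrable (integrableZr _ _ (hi i)) => // t _ /=.
have [sumE sumI] := @Rint_sum _ (index_enum 'I_n) (fun i t => h t i ord0 * c i ord0) hci.
have dotE : dot c c = Rintegral P setT (fun t => \sum_i h t i ord0 * c i ord0).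
  rewrite sumE /dot; apply: eq_bigr => i _.
  rewrite RintegralZr //; last exact: hi.
  by rewrite /c /Evec mxE.
have gi' : P.-integrable setT (EFin \o (fun t => K * enorm c * g t)).
  by apply: eq_integrable (integrableZl _ (K * enorm c) gi) => // t _ /=.
have Hle : dot c c <= K * enorm c * Rintegral P setT g.
  rewrite dotE (toD _ sumI).
  rewrite -RintegralZl //; rewrite (toD _ gi').
  apply: le_Rintegral => //.
  - exact: integrableS sumI.
  - exact: integrableS gi'.
  move=> t Dt /=; rewrite -/(dot (h t) c).
  apply: le_trans (CS' _ _) _; rewrite mulrAC.
  by apply: ler_wpM2r; [exact: enorm_ge0 | exact: hb].
rewrite -enorm_sq in Hle.
have Rg0 : 0 <= Rintegral P setT g by apply: Rintegral_ge0 => t _; exact: g0.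
have [c0|cn] := eqVneq (enorm c) 0; first by rewrite c0; apply: mulr_ge0.
have cp : 0 < enorm c by rewrite lt_def cn enorm_ge0.
by rewrite expr2 mulrAC ler_pM2r in Hle.
Qed.
End Int.


Section Glue.
Variable R : realType.


Lemma enorm_col0r m n (z : 'cV[R]_m) : enorm (col_mx z (0 : 'cV[R]_n)) = enorm z.
Proof.
apply/eqP; rewrite -(eqrXn2 (_ : (0 < 2)%N)) ?enorm_ge0 //.
by rewrite enorm_col enorm0 expr0n addr0.
Qed.

Lemma lip_nonneg dx dy (L : R) : (0 < dx)%N ->
  (forall (x x' : 'cV[R]_dx) (y : 'cV[R]_dy), 0 <= L * enorm (stack (x - x') (y - y))) ->
  0 <= L.
Proof.
move=> dx0 H.
pose z : 'cV[R]_dx := const_mx 1.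
have zp : 0 < enorm z.
  rewrite lt_def enorm_ge0 andbT; apply/negP => /eqP /enorm_eq0 /matrixP.
  move=> /(_ (Ordinal dx0) ord0); rewrite !mxE => /eqP; by rewrite oner_eq0.
have := H z 0 0; rewrite subr0 subrr /stack enorm_col0r.
by rewrite pmulr_lge0.
Qed.

Lemma grad_le dx dy (F : 'cV[R]_dx -> 'cV[R]_dy -> R) D L x y :
  is_gradient F D -> lipschitz_xy F L -> 0 <= L -> enorm (D x y) <= L.
Proof.
move=> HG HL L0; have := grad_sq x y HG HL.
have [->|dn] := eqVneq (enorm (D x y)) 0; first by move=> _.
have dp : 0 < enorm (D x y) by rewrite lt_def dn enorm_ge0.
by rewrite expr2 ler_pM2r.
Qed.

Lemma EvecB d (T : measurableType d) (P : probability T R) n (h1 h2 : T -> 'cV[R]_n) :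
  (forall i, P.-integrable setT (fun t => (h1 t i ord0)%:E)) ->
  (forall i, P.-integrable setT (fun t => (h2 t i ord0)%:E)) ->
  Evec P h1 - Evec P h2 = Evec P (fun t => h1 t - h2 t).
Proof.
move=> i1 i2; apply/matrixP => i j; rewrite (ord1 j) !mxE -RintegralB //; last first.
  exact: i2.
  exact: i1.
by apply: eq_Rintegral => t _; rewrite !mxE.
Qed.
End Glue.

Theorem proposition1
  (R : realType) (dx dy N : nat) (d1 d2 : measure_display)
  (T1 : measurableType d1) (T2 : measurableType d2)
  (* joint law of (xi, eta), conditional law of eta given xi *)
  (P : probability (T1 * T2)%type R) (Pc : T1 -> probability T2 R)
  (* a full-measure set of xi's (the support Xi of P_xi) *)
  (Xi : set T1)
  (f g : 'cV[R]_dx -> 'cV[R]_dy -> T1 -> T2 -> R)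
  (Df Dg : 'cV[R]_dx -> 'cV[R]_dy -> T1 -> T2 -> 'cV[R]_(dx + dy))
  (Hf Hg : 'cV[R]_dx -> 'cV[R]_dy -> T1 -> T2 -> 'M[R]_(dx + dy))
  (Lf0 Lf1 Lg1 Lg2 mu sf sg1 sg2 : R)
  (ystar : 'cV[R]_dx -> T1 -> 'cV[R]_dy)
  (Phi : T1 -> 'cV[R]_N) (Wstar : 'cV[R]_dx -> 'M[R]_(dy, N)) :
  (0 < dx)%N -> (0 < dy)%N -> (0 < N)%N ->
  (* probabilistic setting *)
  measurable Xi -> P (Xi `*` setT) = 1%E ->
  (forall A B, measurable A -> measurable B ->
     P (A `*` B) = (\int[P]_(p in A `*` setT) Pc p.1 B)%E) ->
  (* f, g twice differentiable in (x,y), with gradients Df, Dg and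
     Hessians Hf, Hg *)
  (forall xi eta, Xi xi ->
     is_gradient (fun x y => f x y xi eta) (fun x y => Df x y xi eta) /\
     is_jacobian (fun x y => Df x y xi eta) (fun x y => Hf x y xi eta) /\
     is_gradient (fun x y => g x y xi eta) (fun x y => Dg x y xi eta) /\
     is_jacobian (fun x y => Dg x y xi eta) (fun x y => Hg x y xi eta)) ->
  (* Assumption 1 (i) *)
  (forall xi eta, Xi xi ->
     lipschitz_xy (fun x y => f x y xi eta) Lf0 /\
     lipschitz_xy_vec (fun x y => Df x y xi eta) Lf1 /\
     lipschitz_xy_vec (fun x y => Dg x y xi eta) Lg1 /\
     lipschitz_xy_mat (fun x y => Hg x y xi eta) Lg2) ->
  (* Assumption 1 (ii) *)
  0 < mu ->
  (forall x xi eta, Xi xi -> strongly_convex_y (fun y => g x y xi eta) mu) ->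
  (* Assumption 1 (iii): unbiasedness w.r.t. the conditional law ... *)
  (forall xi, Xi xi ->
     is_gradient (fun x y => Rintegral (Pc xi) setT (f x y xi))
                 (fun x y => Evec (Pc xi) (Df x y xi)) /\
     is_gradient (fun x y => Rintegral (Pc xi) setT (g x y xi))
                 (fun x y => Evec (Pc xi) (Dg x y xi)) /\
     is_jacobian (fun x y => Evec (Pc xi) (Dg x y xi))
                 (fun x y => Emat (Pc xi) (Hg x y xi))) ->
  (* ... and bounded conditional variances *)
  (forall x y xi, Xi xi ->
     (\int[Pc xi]_eta ((enorm (Df x y xi eta - Evec (Pc xi) (Df x y xi))) ^+ 2)%:E
        <= (sf ^+ 2)%:E)%E /\
     (\int[Pc xi]_eta ((enorm (Dg x y xi eta - Evec (Pc xi) (Dg x y xi))) ^+ 2)%:E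
        <= (sg1 ^+ 2)%:E)%E /\
     (\int[Pc xi]_eta ((specnorm (Hg x y xi eta - Emat (Pc xi) (Hg x y xi))) ^+ 2)%:E
        <= (sg2 ^+ 2)%:E)%E) ->
  (* y*(x,xi) minimizes G(x,.,xi) = E_{eta|xi}[g(x,.,xi,eta)] *)
  (forall x xi, Xi xi -> forall y,
     Rintegral (Pc xi) setT (g x (ystar x xi) xi)
       <= Rintegral (Pc xi) setT (g x y xi)) ->
  (* W*(x) minimizes G_Phi(x,.) = E_{(xi,eta)}[g(x, W Phi(xi), xi, eta)] *)
  (forall x (W : 'M[R]_(dy, N)),
     Rintegral P setT (fun p => g x (Wstar x *m Phi p.1) p.1 p.2)
       <= Rintegral P setT (fun p => g x (W *m Phi p.1) p.1 p.2)) ->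
  forall x : 'cV[R]_dx,
  (* the expectations involved are well defined (finite) *)
  P.-integrable setT (fun p => (enorm (Wstar x *m Phi p.1 - ystar x p.1))%:E) ->
  (forall i, P.-integrable setT (fun p =>
     (hyper_integrand (Df x (ystar x p.1) p.1 p.2)
                      (Hg x (ystar x p.1) p.1 p.2) i ord0)%:E)) ->
  (forall i, P.-integrable setT (fun p =>
     (hyper_integrand (Df x (Wstar x *m Phi p.1) p.1 p.2)
                      (Hg x (Wstar x *m Phi p.1) p.1 p.2) i ord0)%:E)) ->
  enorm (hypergrad P Df Hg (ystar x) x
         - hypergrad P Df Hg (fun xi => Wstar x *m Phi xi) x)
    <= (Lf1 + Lg2 * Lf0 / mu + Lg2 * Lg1 * Lf0 / mu ^+ 2 + Lf1 * Lg1 / mu)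
       * Rintegral P setT (fun p => enorm (Wstar x *m Phi p.1 - ystar x p.1)).
Proof.
move=> dx0 dy0 N0 mXi PXi _ Hdiff Hlip mu0 Hsc _ _ _ _ x Hint Hi1 Hi2.
set K := (Lf1 + Lg2 * Lf0 / mu + Lg2 * Lg1 * Lf0 / mu ^+ 2 + Lf1 * Lg1 / mu).
set D := Xi `*` [set: T2].
have mD : measurable D by apply: measurableX.
have PD : P (~` D) = 0%E.
  by rewrite probability_setC // PXi -EFinB subrr.
have [p0 Dp0] : D !=set0.
  apply/set0P; apply/negP => /eqP D0.
  by move: PXi; rewrite -/D D0 measure0 => -[] /eqP; rewrite eq_sym oner_eq0.
have nn : 0 <= Lf0 /\ 0 <= Lf1 /\ 0 <= Lg1 /\ 0 <= Lg2.
  have [L1 [L2 [L3 L4]]] := Hlip p0.1 p0.2 (proj1 Dp0).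
  split; [|split; [|split]]; apply: (lip_nonneg (dy:=dy)) dx0 _ => x1 x2 y1.
  - exact: le_trans (normr_ge0 _) (L1 _ _ _ _).
  - exact: le_trans (enorm_ge0 _) (L2 _ _ _ _).
  - exact: le_trans (enorm_ge0 _) (L3 _ _ _ _).
  - exact: le_trans (specnorm_ge0 _) (L4 _ _ _ _).
have [f0 [f1 [g1 g2]]] := nn.
have K0 : 0 <= K by rewrite /K !addr_ge0 // ?mulr_ge0 // ?invr_ge0 ?exprn_ge0 // ltW.
rewrite /hypergrad EvecB //.
apply: (int_bound mD PD K0) => //.
- move=> i; apply: eq_integrable (integrableB _ (Hi1 i) (Hi2 i)) => // t _ /=.
  by rewrite !mxE EFinD EFinN.
- by move=> t; exact: enorm_ge0.
move=> [xi eta] [/= Xxi _].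
have [HGf [HJf [HGg HJg]]] := Hdiff xi eta Xxi.
have [L1 [L2 [L3 L4]]] := Hlip xi eta Xxi.
set y1 := ystar x xi; set y2 := Wstar x *m Phi xi.
set del := enorm (y1 - y2).
have -> : enorm (y2 - y1) = del by rewrite /del -enormN opprB.
have d0 : 0 <= del by exact: enorm_ge0.
have lipv (k : nat) (Fv : 'cV[R]_dx -> 'cV[R]_dy -> 'cV[R]_k) L :
    lipschitz_xy_vec Fv L -> enorm (Fv x y1 - Fv x y2) <= L * del.
  by move=> HL; have := HL x x y1 y2; rewrite subrr /stack enorm_col0.
have inv (y : 'cV[R]_dy) : drsubmx (Hg x y xi eta) \in unitmx /\
    opb (invmx (drsubmx (Hg x y xi eta))) mu^-1.
  apply: coercive_inv => // h.
  exact: (@sc_hess R dx dy (fun x y => g x y xi eta) (fun x y => Dg x y xi eta) (fun x y => Hg x y xi eta) mu x y h HGg HJg (Hsc x xi eta Xxi)).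
have [U1 B1] := inv y1; have [U2 B2] := inv y2.
rewrite /hyper_integrand.
apply: key => //.
- apply: le_trans (enorm_dsub _) _; exact: (grad_le _ _ HGf L1).
- have -> : usubmx (Df x y1 xi eta) - usubmx (Df x y2 xi eta)
           = usubmx (Df x y1 xi eta - Df x y2 xi eta).
    by apply/matrixP => i j; rewrite !mxE.
  by apply: le_trans (enorm_usub _) _; apply: (lipv _ (fun x y => Df x y xi eta)).
- have -> : dsubmx (Df x y1 xi eta) - dsubmx (Df x y2 xi eta)
           = dsubmx (Df x y1 xi eta - Df x y2 xi eta).
    by apply/matrixP => i j; rewrite !mxE.
  by apply: le_trans (enorm_dsub _) _; apply: (lipv _ (fun x y => Df x y xi eta)).
- have -> : ursubmx (Hg x y1 xi eta) - ursubmx (Hg x y2 xi eta)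
           = ursubmx (Hg x y1 xi eta - Hg x y2 xi eta).
    by apply/matrixP => i j; rewrite !mxE.
  apply: opb_ursub; apply: opb_le (specnorm_opb _) _.
  by have := L4 x x y1 y2; rewrite subrr /stack enorm_col0.
- have -> : drsubmx (Hg x y1 xi eta) - drsubmx (Hg x y2 xi eta)
           = drsubmx (Hg x y1 xi eta - Hg x y2 xi eta).
    by apply/matrixP => i j; rewrite !mxE.
  apply: opb_drsub; apply: opb_le (specnorm_opb _) _.
  by have := L4 x x y1 y2; rewrite subrr /stack enorm_col0.
- apply: opb_ursub; exact: (jac_opb _ _ HJg L3).
Qed.
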